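(* Let $n>5$ be prime, and let $v(t)$ be the random walk on $\mathbb{Z}_n$ whose step distribution is uniform over a finite multiset $\Gamma$ of elements of $\mathbb{Z}_n$. If the drift $D(\Gamma)=\sum_{k\in\Gamma}k$ (sum with multiplicity, computed in $\mathbb{Z}_n$) is nonzero, then $v(t)$ is reconstructive.
   Context: The step distribution uniform over the multiset $\Gamma$ assigns to $k$ the probability (multiplicity of $k$ in $\Gamma$)/$|\Gamma|$. The random walk $v(t)$ has $v(1)$ uniform on $\mathbb{Z}_n$ and independent steps with this distribution. A labeling is $f:\mathbb{Z}_n\to\{0,1\}$. The walk is reconstructive if, for any two labelings $f_1,f_2$, the distributions of $\{f_1(v(t))\}_{t\ge1}$ and $\{f_2(v(t))\}_{t\ge1}$ coincide only if there is $\ell\in\mathbb{Z}_n$ with $f_1(k)=f_2(k+\ell)$ for all $k$. *)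

(* Defs.v *)
From mathcomp Require Import all_boot all_order all_algebra.
Set Implicit Arguments. Unset Strict Implicit. Unset Printing Implicit Defensive.
Import Order.TTheory GRing.Theory Num.Theory.
Local Open Scope ring_scope.

(* Random walk on 'Z_n with step distribution uniform over the multiset
   Gam (a seq, multiplicities counted), labeling f : 'Z_n -> bool.

   label_prob Gam f x w = probability that, starting at x, the observed labels
   f(v(1)), ..., f(v(|w|)) equal the word w. *)
Fixpoint label_prob (n : nat) (Gam : seq 'Z_n) (f : 'Z_n -> bool) (x : 'Z_n)
    (w : seq bool) : rat :=
  match w with
  | [::] => 1
  | b :: w' =>
      if f x == b then
        (size Gam)%:R^-1 * \sum_(g <- Gam) label_prob Gam f (x + g) w'
      else 0
  end.

(* Law of the label process with v(1) uniform on 'Z_n: the probability of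
   each finite prefix (finite-dimensional distributions; these determine the
   distribution of the infinite sequence). *)
Definition label_law (n : nat) (Gam : seq 'Z_n) (f : 'Z_n -> bool)
    (w : seq bool) : rat :=
  #|{: 'Z_n}|%:R^-1 * \sum_(x : 'Z_n) label_prob Gam f x w.

Definition same_label_law (n : nat) (Gam : seq 'Z_n) (f1 f2 : 'Z_n -> bool) :=
  forall w : seq bool, label_law Gam f1 w = label_law Gam f2 w.

Definition reconstructive (n : nat) (Gam : seq 'Z_n) : Prop :=
  forall f1 f2 : 'Z_n -> bool, same_label_law Gam f1 f2 ->
    exists l : 'Z_n, forall k : 'Z_n, f1 k = f2 (k + l).

Definition drift (n : nat) (Gam : seq 'Z_n) : 'Z_n := \sum_(k <- Gam) k.

(* Main.v *)
Require Import Defs.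
From mathcomp Require Import all_boot all_order all_algebra all_field.
From mathcomp Require Import zify.
From mathcomp Require Import ring.
From Stdlib Require Import FunctionalExtensionality.
Set Implicit Arguments. Unset Strict Implicit. Unset Printing Implicit Defensive.
Import Order.TTheory GRing.Theory Num.Theory.
Local Open Scope ring_scope.

Section Basic.
Variable p' : nat.
Local Notation N := p'.+2.
Hypothesis prN : prime N.
Variable w : algC.
Hypothesis prim : N.-primitive_root w.

Definition ee (x : 'Z_N) : algC := w ^+ (val x).

Lemma eeD x y : ee (x + y) = ee x * ee y.
Proof. by rewrite /ee /= prim_expr_mod // exprD. Qed.

Lemma ee0 : ee 0 = 1.
Proof. by rewrite /ee /= expr0. Qed.

Lemma eeN x : ee (- x) * ee x = 1.
Proof. by rewrite -eeD addNr ee0. Qed.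

Lemma eeM x y : ee (x * y) = w ^+ (val x * val y).
Proof. by rewrite /ee /= prim_expr_mod. Qed.

Lemma ee_eq1 x : (ee x == 1) = (x == 0).
Proof.
rewrite /ee -(prim_order_dvd prim); apply/idP/eqP => [|->//].
move=> /dvdn_leq; case: x => -[|k] //= Hk; first by move=> _; apply: val_inj.
by move=> /(_ isT); rewrite leqNgt Hk.
Qed.
Lemma sum_ee x : \sum_(y : 'Z_N) ee (x * y) = if x == 0 then N%:R else 0.
Proof.
have [->|nx] := eqVneq x 0.
  under eq_bigr do rewrite mul0r ee0.
  by rewrite sumr_const card_ord.
have : (ee x - 1) * \sum_(y : 'Z_N) ee (x * y) = 0.
  have -> : \sum_(y : 'Z_N) ee (x * y) = \sum_(i < N) (ee x) ^+ i.
    by apply: eq_bigr => y _; rewrite eeM /ee exprM.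
  by rewrite -subrX1 /ee -exprM mulnC exprM (prim_expr_order prim) expr1n subrr.
by move/eqP; rewrite mulf_eq0 subr_eq0 ee_eq1 (negbTE nx) /= => /eqP.
Qed.

Definition hat (h : 'Z_N -> algC) (xi : 'Z_N) := \sum_(y : 'Z_N) h y * ee (- (y * xi)).

Lemma NC_neq0 : (N%:R : algC) != 0.
Proof. by rewrite pnatr_eq0. Qed.

Lemma inversion h x : h x = N%:R^-1 * \sum_(xi : 'Z_N) hat h xi * ee (x * xi).
Proof.
rewrite /hat.
have -> : \sum_(xi : 'Z_N) (\sum_(y : 'Z_N) h y * ee (- (y * xi))) * ee (x * xi)
   = \sum_(y : 'Z_N) h y * \sum_(xi : 'Z_N) ee ((x - y) * xi).
  under eq_bigr do rewrite mulr_suml.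
  rewrite exchange_big /=; apply: eq_bigr => y _; rewrite mulr_sumr.
  apply: eq_bigr => xi _; rewrite -mulrA -eeD mulrBl addrC.
  done.
rewrite (bigD1 x) //= subrr sum_ee eqxx big1 ?addr0.
  by rewrite mulrA mulrC mulrA mulfV ?NC_neq0 // mul1r.
move=> y ny; rewrite sum_ee subr_eq0 eq_sym (negbTE ny) mulr0 //.
Qed.
Definition Phi : {poly rat} := \poly_(i < N) 1.

Lemma size_Phi : size Phi = N.
Proof. by rewrite size_poly_eq // oner_neq0. Qed.

Lemma Phi_monic : Phi \is monic.
Proof. by rewrite monicE lead_coefE size_Phi coef_poly ltnSn. Qed.

Lemma mapPhi_root : root (map_poly ratr Phi) w.
Proof.
apply/rootP; rewrite (horner_coef_wide (n := N)); last first.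
  by rewrite size_map_inj_poly ?size_Phi ?rmorph0 //; apply: fmorph_inj.
have : (w - 1) * \sum_(i < N) (map_poly ratr Phi)`_i * w ^+ i = 0.
  have := subrX1 w N; rewrite (prim_expr_order prim) subrr => E.
  rewrite [RHS]E; congr (_ * _).
  by apply: eq_bigr => i _; rewrite coef_map /= coef_poly ltn_ord rmorph1 mul1r.
move/eqP; rewrite mulf_eq0 subr_eq0 => /orP[/eqP w1|/eqP //].
have := prim_order_dvd prim 1; rewrite w1 expr1 eqxx.
by move=> /(dvdn_leq (ltn0Sn 0)).
Qed.

Lemma minpoly_Phi q : root (map_poly ratr q) w -> Phi %| q.
Proof.
have [pm [Dpm monpm] dvd] := minCpolyP w.
have szpm : size pm = N.
  have := size_cyclotomic w N; rewrite -(minCpoly_cyclotomic prim) Dpm.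
  rewrite size_map_inj_poly ?rmorph0 //; last by apply: fmorph_inj.
  by rewrite totient_prime.
have : pm %| Phi by rewrite -dvd mapPhi_root.
move=> dpm; have : pm %= Phi by rewrite -dvdp_size_eqp // szpm size_Phi.
rewrite eqp_monic ?Phi_monic // => /eqP <-.
by rewrite -dvd.
Qed.

Lemma cycl (d : 'Z_N -> rat) :
  \sum_(k : 'Z_N) ratr (d k) * ee k = 0 -> forall k, d k = d 0.
Proof.
move=> H.
pose q : {poly rat} := \poly_(i < N) d (inord i).
have rq : root (map_poly ratr q) w.
  apply/rootP; rewrite (horner_coef_wide (n := N)); last first.
    by rewrite size_map_inj_poly ?rmorph0 ?size_poly //; apply: fmorph_inj.
  rewrite -[RHS]H; apply: eq_bigr => i _.
  by rewrite coef_map coef_poly ltn_ord /ee; congr (ratr (d _) * _); apply: val_inj; rewrite /= inordK.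
have /dvdpP [r Dq] := minpoly_Phi rq.
have szr : (size r <= 1)%N.
  have [->|nr] := eqVneq r 0; first by rewrite size_poly0.
  have := size_poly N (fun i => d (inord i)); rewrite -/q Dq size_Mmonic ?Phi_monic //.
  rewrite size_Phi; have L a : ((a + N).-1 <= N -> a <= 1)%N by lia.
  exact: L.
have cq k : (k < N)%N -> d (inord k) = r`_0.
  move=> kN; have := congr1 (fun p : {poly rat} => p`_k) Dq; rewrite /= coef_poly kN => ->.
  by rewrite (size1_polyC szr) coefCM coef_poly kN mulr1 coefC.
move=> k; have -> : k = inord (val k) by apply: val_inj; rewrite /= inordK.
have -> : (0 : 'Z_N) = inord 0 by apply: val_inj; rewrite /= inordK.
by rewrite !cq ?ltn_ord.
Qed.

Lemma unitZ (x : 'Z_N) : x != 0 -> x \is a GRing.unit.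
Proof.
move=> nx; rewrite -(natr_Zp x) unitZpE // prime_coprime //.
have xpos : (0 < val x)%N.
  by rewrite lt0n; apply: contra nx => /eqP E; apply/eqP; apply: val_inj.
have xlt := ltn_ord x.
apply/negP => /(dvdn_leq xpos); rewrite leqNgt xlt.
done.
Qed.

Lemma sum_count (V : nmodType) (F : 'Z_N -> V) (s : seq 'Z_N) :
  \sum_(g <- s) F g = \sum_(g : 'Z_N) F g *+ count_mem g s.
Proof.
elim: s => [|a s IH]; first by rewrite big_nil big1 // => g _; rewrite mulr0n.
rewrite big_cons IH /=.
under [in RHS]eq_bigr do rewrite mulrnDr.
rewrite big_split /=; congr (_ + _).
rewrite (bigD1 a) //= eqxx mulr1n big1 ?addr0 // => g ng.
by rewrite eq_sym (negbTE ng) mulr0n.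
Qed.

Section Walk.
Variable Gam : seq 'Z_N.
Hypothesis N2 : (2 < N)%N.
Hypothesis Dnz : drift Gam != 0.
Local Notation c g := (count_mem g Gam).
Local Notation m := (size Gam).

Lemma Gam_nil : m != 0%N.
Proof. by apply: contra Dnz; rewrite size_eq0 => /eqP E; rewrite /drift E big_nil. Qed.

Lemma drift_inv h : h != 0 -> h != 1 -> (forall g, c (h * g) = c g) -> drift Gam = 0.
Proof.
move=> h0 h1 Hc.
have E : drift Gam = h * drift Gam.
  rewrite /drift sum_count [in LHS](reindex_inj (mulrI (unitZ h0))) /= mulr_sumr.
  by apply: eq_bigr => g _; rewrite Hc mulrnAr.
have : (h - 1) * drift Gam = 0 by rewrite mulrBl -E mul1r subrr.
move/(congr1 (fun x => (h - 1)^-1 * x)); rewrite mulKr ?mulr0 //.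
by apply: unitZ; rewrite subr_eq0.
Qed.

Lemma two_ok : (2 : 'Z_N) != 0 /\ (2 : 'Z_N) != 1.
Proof.
split; apply/eqP => /(congr1 val) /=; rewrite !modn_small //; lia.
Qed.

Lemma reidx (a : 'Z_N -> algC) xi : xi != 0 ->
  \sum_(g : 'Z_N) a g * ee (g * xi) = \sum_(k : 'Z_N) a (k * xi^-1) * ee k.
Proof.
move=> nxi; rewrite [RHS](reindex_inj (mulIr (unitZ nxi))) /=.
by apply: eq_bigr => g _; rewrite mulrK // unitZ.
Qed.

Lemma sumG xi : xi != 0 -> \sum_(g <- Gam) ee (g * xi) =
   \sum_(k : 'Z_N) ratr ((c (k * xi^-1))%:R) * ee k.
Proof.
move=> nxi; rewrite sum_count.
under eq_bigr do rewrite -mulr_natl.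
by rewrite reidx //; apply: eq_bigr => k _; rewrite ratr_nat.
Qed.

Lemma mulZ_neq0 (h g : 'Z_N) : h != 0 -> g != 0 -> h * g != 0.
Proof.
move=> h0 g0; apply/eqP => E; move/eqP: g0; apply; apply: (mulrI (unitZ h0)).
by rewrite E mulr0.
Qed.

Lemma c_const_drift0 : ~ (forall g, g != 0 -> c g = c 1).
Proof.
move=> Hc; have [t0 t1] := two_ok; apply/negP: Dnz; rewrite negbK; apply/eqP.
apply: (drift_inv t0 t1) => g.
have [->|ng] := eqVneq g 0; first by rewrite mulr0.
by rewrite !Hc // mulZ_neq0.
Qed.

Lemma sum0 : \sum_(g <- Gam) ee (g * 0) = m%:R.
Proof.
by under eq_bigr do rewrite mulr0 ee0; rewrite big_const_seq count_predT -Monoid.iteropE /= -[in RHS](mul1r m%:R) mulr_natr.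
Qed.

Lemma sumG_neq0 xi : \sum_(g <- Gam) ee (g * xi) != 0.
Proof.
have [->|nxi] := eqVneq xi 0; first by rewrite sum0 pnatr_eq0 Gam_nil.
rewrite sumG //; apply/eqP => /cycl Hd; apply: c_const_drift0 => g _.
have E k : c (k * xi^-1) = c 0.
  by have /eqP := Hd k; rewrite mul0r eqr_nat => /eqP.
by rewrite -(mulrK (unitZ nxi) g) -(mulrK (unitZ nxi) 1) !E.
Qed.

Lemma sumG_inj xi zeta : xi != zeta ->
  \sum_(g <- Gam) ee (g * xi) != \sum_(g <- Gam) ee (g * zeta).
Proof.
wlog: xi zeta / zeta != 0.
  move=> W; have [z0|] := eqVneq zeta 0; last by apply: W.
  rewrite eq_sym => nxz; rewrite eq_sym; apply: W => //; rewrite -z0 eq_sym //.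
move=> nz nxz; apply/eqP => E.
have [x0|nx] := eqVneq xi 0.
  move: E; rewrite x0 sum0 sumG // => E.
  have E2 : \sum_(k : 'Z_N) ratr ((c (k * zeta^-1))%:R - (k == 0)%:R * m%:R) * ee k = 0.
    under eq_bigr do rewrite rmorphB mulrBl.
    rewrite sumrB -E (bigD1 0) //= big1 ?addr0.
      by rewrite mul1r ee0 mulr1 ratr_nat subrr.
    by move=> k nk; rewrite (negbTE nk) mul0r rmorph0 mul0r.
  have Hd := cycl E2.
  apply: c_const_drift0 => g ng.
  have F k : k != 0 -> ((c (k * zeta^-1))%:R : rat) = (c 0)%:R - m%:R.
    move=> nk; have := Hd k; rewrite (negbTE nk) mul0r subr0 eqxx mul1r mul0r => ->.
    done.
  have G h : h != 0 -> c h = c (h * zeta * zeta^-1) by rewrite mulrK // unitZ.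
  apply/eqP; rewrite -(eqr_nat rat) G // [c 1]G ?oner_neq0 //.
  by rewrite !F ?mulZ_neq0 ?oner_neq0.
move: E; rewrite !sumG // => E.
have E2 : \sum_(k : 'Z_N) ratr ((c (k * xi^-1))%:R - (c (k * zeta^-1))%:R : rat) * ee k = 0.
  under eq_bigr do rewrite rmorphB mulrBl.
  by rewrite sumrB E subrr.
have Hd := cycl E2.
have F k : c (k * xi^-1) = c (k * zeta^-1).
  by have /eqP := Hd k; rewrite !mul0r subrr subr_eq0 eqr_nat => /eqP.
have h0 : xi * zeta^-1 != 0 by rewrite mulZ_neq0 // invr_eq0.
have h1 : xi * zeta^-1 != 1.
  apply: contra nxz => /eqP H; apply/eqP.
  by rewrite -[xi](mulrVK (unitZ nz)) H mul1r.
apply/negP: Dnz; rewrite negbK; apply/eqP; apply: (drift_inv h0 h1) => g.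
have := F (g * xi); rewrite mulrK ?unitZ // => ->.
by rewrite mulrC mulrA.
Qed.

Definition lam xi := (m%:R)^-1 * \sum_(g <- Gam) ee (g * xi).

Lemma lam_neq0 xi : lam xi != 0.
Proof. by rewrite mulf_eq0 negb_or invr_eq0 pnatr_eq0 Gam_nil sumG_neq0. Qed.

Lemma lam_inj : injective lam.
Proof.
move=> xi zeta E; apply/eqP; apply: contraT => nxz.
have := sumG_inj nxz; rewrite -(mulrI _ E) ?eqxx //.
by rewrite unitfE invr_eq0 pnatr_eq0 Gam_nil.
Qed.


Definition Pop (h : 'Z_N -> algC) (x : 'Z_N) : algC :=
  (m%:R)^-1 * \sum_(g <- Gam) h (x + g).

Lemma Pop_sum (I : Type) (s : seq I) (F : I -> 'Z_N -> algC) x :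
  \sum_(i <- s) Pop (F i) x = Pop (fun y => \sum_(i <- s) F i y) x.
Proof.
rewrite /Pop -mulr_sumr; congr (_ * _); rewrite exchange_big //.
Qed.

Lemma sum_mulPop (I : Type) (s : seq I) (F : I -> 'Z_N -> algC) c x :
  \sum_(i <- s) c * Pop (F i) x = c * Pop (fun y => \sum_(i <- s) F i y) x.
Proof. by rewrite -mulr_sumr Pop_sum. Qed.

Lemma Pop_lin (a : 'Z_N -> algC) x :
  Pop (fun y => \sum_(xi : 'Z_N) a xi * ee (y * xi)) x =
  \sum_(xi : 'Z_N) a xi * lam xi * ee (x * xi).
Proof.
rewrite /Pop exchange_big mulr_sumr; apply: eq_bigr => xi _.
under eq_bigr do rewrite mulrDl eeD mulrA.
by rewrite -mulr_sumr /lam; ring.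
Qed.

Lemma iterP k h x :
  iter k Pop h x = \sum_(xi : 'Z_N) N%:R^-1 * hat h xi * lam xi ^+ k * ee (x * xi).
Proof.
elim: k x => [|k IH] x.
  by rewrite /= {1}(inversion h x) mulr_sumr; apply: eq_bigr => xi _; rewrite expr0 mulr1 mulrA.
rewrite iterS.
have -> : iter k Pop h = fun y =>
  \sum_(xi : 'Z_N) (N%:R^-1 * hat h xi * lam xi ^+ k) * ee (y * xi).
  by apply: functional_extensionality => y; rewrite IH.
by rewrite Pop_lin; apply: eq_bigr => xi _; rewrite exprS; ring.
Qed.

Lemma hat_mul (g : 'Z_N -> algC) (a : 'Z_N -> algC) zeta :
  hat (fun y => g y * \sum_(xi : 'Z_N) a xi * ee (y * xi)) zeta =
  \sum_(xi : 'Z_N) a xi * hat g (zeta - xi).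
Proof.
rewrite /hat.
under eq_bigr do rewrite mulr_sumr mulr_suml.
rewrite exchange_big; apply: eq_bigr => xi _; rewrite mulr_sumr.
apply: eq_bigr => y _.
have -> : ee (- (y * (zeta - xi))) = ee (y * xi) * ee (- (y * zeta)).
  by rewrite -eeD; congr ee; ring.
ring.
Qed.

Lemma sum_hat (g : 'Z_N -> algC) (a : 'Z_N -> algC) :
  \sum_(x : 'Z_N) g x * \sum_(zeta : 'Z_N) a zeta * ee (x * zeta) =
  \sum_(zeta : 'Z_N) a zeta * hat g (- zeta).
Proof.
rewrite /hat; under eq_bigr do rewrite mulr_sumr.
rewrite exchange_big; apply: eq_bigr => z _; rewrite mulr_sumr.
by apply: eq_bigr => x _; rewrite mulrCA mulrN opprK.
Qed.


Definition bC (b : bool) : algC := (b : nat)%:R.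

Lemma lp_cons f x b ww : ratr (label_prob Gam f x (b :: ww)) =
  bC (f x == b) * Pop (fun y => ratr (label_prob Gam f y ww)) x.
Proof.
rewrite /= /Pop /bC; case: eqP => _ /=; last by rewrite rmorph0 mul0r.
by rewrite mul1r rmorphM /= fmorphV rmorph_nat rmorph_sum.
Qed.

Fixpoint pp (f : 'Z_N -> bool) (x : 'Z_N) (p : seq (option bool)) : algC :=
  match p with
  | [::] => 1
  | o :: p' => (if o is Some b then bC (f x == b) else 1) * Pop (fun y => pp f y p') x
  end.

Fixpoint comps (p : seq (option bool)) : seq (seq bool) :=
  match p with
  | [::] => [:: [::]]
  | Some b :: p' => map (cons b) (comps p')
  | None :: p' => map (cons true) (comps p') ++ map (cons false) (comps p')
  end.

Lemma pp_expand f p x :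
  pp f x p = \sum_(ww <- comps p) ratr (label_prob Gam f x ww).
Proof.
elim: p x => [|o p IH] x; first by rewrite /= big_seq1 rmorph1.
have E : (fun y => pp f y p) = (fun y => \sum_(ww <- comps p) ratr (label_prob Gam f y ww)).
  by apply: functional_extensionality => y; rewrite IH.
case: o => [b|] /=.
  rewrite big_map; under eq_bigr do rewrite lp_cons.
  by rewrite -mulr_sumr Pop_sum E.
rewrite big_cat !big_map /=.
under eq_bigr do rewrite lp_cons.
under [X in _ = _ + X]eq_bigr do rewrite lp_cons.
rewrite !sum_mulPop -E -mulrDl /bC.
by case: (f x); rewrite /= ?mul1r ?mul0r ?add0r ?addr0 ?mul1r.
Qed.

Lemma same_pp f1 f2 : same_label_law Gam f1 f2 ->
  forall p, \sum_(x : 'Z_N) pp f1 x p = \sum_(x : 'Z_N) pp f2 x p.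
Proof.
move=> S p.
have K f ww : \sum_(x : 'Z_N) label_prob Gam f x ww = #|{: 'Z_N}|%:R * label_law Gam f ww.
  rewrite /label_law mulrA mulfV ?mul1r // pnatr_eq0 card_ord //.
under eq_bigr do rewrite pp_expand.
under [in RHS]eq_bigr do rewrite pp_expand.
rewrite exchange_big [in RHS]exchange_big; apply: eq_bigr => ww _.
by rewrite -!rmorph_sum !K S.
Qed.

Lemma Pop1 x : Pop (fun _ => 1) x = 1.
Proof.
rewrite /Pop big_const_seq count_predT -Monoid.iteropE /=.
have -> : iterop m +%R 1 0 = m%:R :> algC.
  by case: m => // k; rewrite iteropS -[RHS]mulr_natl mulr_natr /= mulr1 -iteropS.
by rewrite mulVf // pnatr_eq0 Gam_nil.
Qed.

Lemma pp_none f k p x :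
  pp f x (nseq k None ++ p) = iter k Pop (fun y => pp f y p) x.
Proof.
elim: k x => [|k IH] x //=.
have -> : (fun y => pp f y (nseq k None ++ p)) = iter k Pop (fun y => pp f y p).
  by apply: functional_extensionality => y; rewrite IH.
by rewrite mul1r.
Qed.

Definition pat s t := Some true :: nseq s None ++ Some true :: nseq t None ++ [:: Some true].

Definition Smom (f : 'Z_N -> bool) a b :=
  \sum_(x : 'Z_N) bC (f x) * iter a Pop (fun y => bC (f y) * iter b Pop (fun z => bC (f z)) y) x.

Lemma pp_pat f s t : \sum_(x : 'Z_N) pp f x (pat s t) = Smom f s.+1 t.+1.
Proof.
apply: eq_bigr => x _; rewrite /pat /= eqb_id; congr (_ * _).
have E1 : (fun z => pp f z [:: Some true]) = (fun z => bC (f z)).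
  by apply: functional_extensionality => z; rewrite /= eqb_id Pop1 mulr1.
have E2 : (fun y => pp f y (Some true :: nseq t None ++ [:: Some true])) =
    (fun y => bC (f y) * iter t.+1 Pop (fun z => bC (f z)) y).
  apply: functional_extensionality => y; rewrite /= eqb_id; congr (_ * _).
  have -> : (fun y => pp f y (nseq t None ++ [:: Some true])) = iter t Pop (fun z => bC (f z)).
    by apply: functional_extensionality => z; rewrite pp_none E1.
  by [].
have -> : (fun y => pp f y (nseq s None ++ Some true :: nseq t None ++ [:: Some true])) =
   iter s Pop (fun y => bC (f y) * iter t.+1 Pop (fun z => bC (f z)) y).
  by apply: functional_extensionality => z; rewrite pp_none E2.
by [].
Qed.


Lemma Smom_four f a b : Smom f a b =
  \sum_(zeta : 'Z_N) lam zeta ^+ a *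
     (N%:R^-1 * hat (fun z => bC (f z)) (- zeta) *
      \sum_(xi : 'Z_N) lam xi ^+ b *
         (N%:R^-1 * hat (fun z => bC (f z)) xi * hat (fun z => bC (f z)) (zeta - xi))).
Proof.
rewrite /Smom.
set F := hat (fun z => bC (f z)).
have Hin : iter b Pop (fun z => bC (f z)) =
   fun y => \sum_(xi : 'Z_N) (N%:R^-1 * F xi * lam xi ^+ b) * ee (y * xi).
  by apply: functional_extensionality => y; rewrite iterP.
rewrite Hin.
under eq_bigr do rewrite iterP.
rewrite sum_hat; apply: eq_bigr => zeta _; rewrite hat_mul -/F.
have -> : \sum_(xi : 'Z_N) N%:R^-1 * F xi * lam xi ^+ b * F (zeta - xi) =
  \sum_(xi : 'Z_N) lam xi ^+ b * (N%:R^-1 * F xi * F (zeta - xi)).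
  by apply: eq_bigr => xi _; ring.
ring.
Qed.

End Walk.

Lemma vander (l cc : 'Z_N -> algC) : injective l -> (forall i, l i != 0) ->
  (forall s, \sum_(i : 'Z_N) l i ^+ s.+1 * cc i = 0) -> forall i, cc i = 0.
Proof.
move=> linj l0 H i0.
pose q := \prod_(j | j != i0) ('X - (l j)%:P).
have E : \sum_(i : 'Z_N) q.[l i] * l i * cc i = 0.
  have -> : \sum_(i : 'Z_N) q.[l i] * l i * cc i =
     \sum_(k < size q) q`_k * \sum_(i : 'Z_N) l i ^+ k.+1 * cc i.
    under eq_bigr do rewrite horner_coef mulr_suml mulr_suml.
    rewrite exchange_big; apply: eq_bigr => k _; rewrite mulr_sumr.
    by apply: eq_bigr => i _; rewrite exprS; ring.
  by rewrite big1 // => k _; rewrite H mulr0.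
move: E; rewrite (bigD1 i0) //= big1 ?addr0.
  move/eqP; rewrite !mulf_eq0 (negbTE (l0 i0)) orbF => /orP[|/eqP //].
  rewrite horner_prod; move/prodf_neq0 => H2; exfalso; apply: H2 => j nj.
  rewrite hornerXsubC subr_eq0; apply/eqP => /linj E; by rewrite E eqxx in nj.
move=> i ni; rewrite horner_prod (bigD1 i ni) /=.
by rewrite hornerXsubC subrr !mul0r.
Qed.

Definition FF (f : 'Z_N -> bool) := hat (fun z => bC (f z)).
Definition cnt (f : 'Z_N -> bool) := (\sum_(y : 'Z_N) (f y : nat))%N.

Lemma FF0 f : FF f 0 = (cnt f)%:R.
Proof.
rewrite /FF /hat /cnt natr_sum; apply: eq_bigr => y _.
by rewrite mulr0 oppr0 ee0 mulr1.
Qed.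

Lemma cnt0 f : cnt f = 0%N -> forall y, f y = false.
Proof.
move/eqP; rewrite /cnt sum_nat_eq0 => /forallP H y.
by have := H y; case: (f y).
Qed.

Lemma cntN f : cnt f = N -> forall y, f y = true.
Proof.
move=> E.
have E2 : (\sum_(y : 'Z_N) ((f y : nat) + (~~ f y : nat)) = N)%N.
  rewrite (eq_bigr (fun _ => 1%N)); last by move=> y _; case: (f y).
  by rewrite sum_nat_const card_ord muln1.
rewrite big_split /= -/(cnt f) E in E2.
move: E2 => /(congr1 (fun t => t - N)%N); rewrite addKn subnn => /eqP.
rewrite sum_nat_eq0 => /forallP H y.
by have := H y; case: (f y).
Qed.

Lemma cnt_const (f : 'Z_N -> bool) : (forall y, f y = f (0%R : 'Z_N)) -> cnt f = (f (0%R : 'Z_N) * N)%N.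
Proof.
move=> H; rewrite /cnt (eq_bigr (fun _ => (f 0 : nat))); last by move=> y _; rewrite H.
by rewrite sum_nat_const card_ord mulnC.
Qed.

Lemma bC_inj : injective bC.
Proof.
by move=> [] [] //; rewrite /bC /= => /eqP; rewrite ?oner_eq0 // eq_sym oner_eq0.
Qed.

Lemma FF_nz f : (exists y, f y != f 0) -> forall xi, FF f xi != 0.
Proof.
move=> [y0 Hy0] xi.
have [->|nxi] := eqVneq xi 0.
  rewrite FF0 pnatr_eq0; apply/eqP => /cnt0 H.
  by move: Hy0; rewrite !H.
apply/eqP => E.
have E2 : \sum_(g : 'Z_N) bC (f (- g)) * ee (g * xi) = 0.
  rewrite -[RHS]E /FF /hat (reindex_inj oppr_inj) /=.
  by apply: eq_bigr => g _; rewrite opprK mulNr.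
move: E2; rewrite reidx //.
have -> : \sum_(k : 'Z_N) bC (f (- (k * xi^-1))) * ee k =
   \sum_(k : 'Z_N) ratr ((f (- (k * xi^-1)) : nat)%:R) * ee k.
  by apply: eq_bigr => k _; rewrite ratr_nat.
move=> /cycl Hd.
have C y : f y = f 0.
  have := Hd (- (y * xi)); rewrite mul0r oppr0.
  rewrite mulNr opprK mulrK ?unitZ // => /eqP; rewrite eqr_nat.
  by case: (f y); case: (f 0).
by move: Hy0; rewrite C eqxx.
Qed.

Lemma recon f1 f2 :
  (forall zeta xi, FF f1 (- zeta) * FF f1 xi * FF f1 (zeta - xi) =
                   FF f2 (- zeta) * FF f2 xi * FF f2 (zeta - xi)) ->
  exists l, forall k, f1 k = f2 (k + l).
Proof.
move=> HW.
have Hc : cnt f1 = cnt f2.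
  have := HW 0 0; rewrite subrr oppr0 !FF0 -!natrM => /eqP; rewrite eqr_nat => /eqP.
  rewrite -!mulnA -[(_ * (_ * _))%N]/(_ ^ 3)%N -[(cnt f2 * (_ * _))%N]/(_ ^ 3)%N.
  by move/eqP; rewrite eqn_exp2r // => /eqP.
have const_case f g : cnt f = cnt g -> (forall y, f y = f 0) ->
    forall y, g y = f y.
  move=> E C y; move: E; rewrite cnt_const // C.
  case: (f 0) => E.
    by rewrite (cntN (f := g)) // -E mul1n.
  by rewrite (cnt0 (f := g)) // -E mul0n.
have [C1|NC1] := boolP [forall y, f1 y == f1 0].
  exists 0 => k; rewrite addr0 (const_case f1 f2) //.
  by move=> y; apply/eqP; move/forallP: C1.
have NC1' : exists y, f1 y != f1 0.
  by move/forallPn: NC1 => [y Hy]; exists y.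
have NC2' : exists y, f2 y != f2 0.
  apply/existsP; apply: contraT; rewrite negb_exists => /forallP C2.
  have C2' : forall z, f2 z = f2 0.
    by move=> z; have := C2 z; rewrite negbK => /eqP.
  move/forallPn: NC1 => [y /negP Hy]; exfalso; apply: Hy.
  by rewrite !(const_case f2 f1 (esym Hc) C2') C2'.
have A0 := FF_nz NC1'; have B0 := FF_nz NC2'.
have [H HH] : {H : 'Z_N -> algC | forall xi, H xi = FF f2 xi / FF f1 xi}.
  by exists (fun xi => FF f2 xi / FF f1 xi).
have H0 : H 0 = 1 by rewrite HH !FF0 Hc mulfV // -FF0.
have Hrel zeta xi : H (- zeta) * H xi * H (zeta - xi) = 1.
  rewrite !HH; have := HW zeta xi => E.
  have -> : FF f2 (- zeta) / FF f1 (- zeta) * (FF f2 xi / FF f1 xi) *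
     (FF f2 (zeta - xi) / FF f1 (zeta - xi)) =
     (FF f2 (- zeta) * FF f2 xi * FF f2 (zeta - xi)) /
     (FF f1 (- zeta) * FF f1 xi * FF f1 (zeta - xi)).
    by field; rewrite ?A0.
  by rewrite -E mulfV // !mulf_neq0.
have HN xi : H xi * H (- xi) = 1.
  by have := Hrel 0 xi; rewrite oppr0 H0 mul1r sub0r.
have HD a b : H (a + b) = H a * H b.
  have := Hrel (a + b) a; have -> : a + b - a = b by rewrite addrC addKr.
  move=> E.
  by rewrite -[LHS]mulr1 -E !mulrA HN mul1r.
have HX k : H (k%:R) = H 1 ^+ k.
  elim: k => [|k IH]; first by rewrite H0 expr0.
  have -> : (k.+1%:R : 'Z_N) = k%:R + 1 by rewrite natr1.
  by rewrite HD IH exprSr.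
have H1N : H 1 ^+ N = 1 by rewrite -HX pchar_Zp.
have [j Hj] := prim_rootP prim H1N.
have Hxi xi : H xi = ee (j * xi).
  by rewrite -[in LHS](natr_Zp xi) HX Hj -exprM eeM.
pose g z := bC (f1 (z + j)).
have Hg : forall xi, hat g xi = FF f2 xi.
  move=> xi.
  have -> : FF f2 xi = H xi * FF f1 xi by rewrite HH mulfVK.
  rewrite Hxi /FF /hat mulr_sumr [in RHS](reindex_inj (addIr j)) /=.
  apply: eq_bigr => z _; rewrite /g mulrCA; congr (_ * _).
  by rewrite -eeD; congr ee; ring.
exists (- j) => k.
have := inversion g (k - j); rewrite /g subrK.
under eq_bigr do rewrite Hg.
rewrite /FF -inversion => /bC_inj.
done.
Qed.

Lemma main_N (Gam : seq 'Z_N) : (2 < N)%N -> drift Gam != 0 -> reconstructive Gam.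
Proof.
move=> N2 Dnz f1 f2 S; apply: recon => zeta xi.
have linj := lam_inj N2 Dnz; have l0 := lam_neq0 N2 Dnz.
set F1 := FF f1; set F2 := FF f2.
have E s t : Smom Gam f1 s.+1 t.+1 = Smom Gam f2 s.+1 t.+1.
  by rewrite -!pp_pat //; apply: same_pp.
pose C (F : 'Z_N -> algC) t z := \sum_(x : 'Z_N) lam Gam x ^+ t.+1 *
   (N%:R^-1 * N%:R^-1 * (F (- z) * F x * F (z - x))).
have E2 t z : C F1 t z = C F2 t z.
  apply/eqP; rewrite -subr_eq0; apply/eqP; move: z; apply: (vander linj l0) => s.
  under eq_bigr do rewrite mulrBr.
  apply/eqP; rewrite sumrB subr_eq0; apply/eqP.
  have := E s t; rewrite !Smom_four // => H.
  have K F z : lam Gam z ^+ s.+1 * C F t z = lam Gam z ^+ s.+1 *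
     (N%:R^-1 * F (- z) * \sum_(x : 'Z_N) lam Gam x ^+ t.+1 *
         (N%:R^-1 * F x * F (z - x))).
    congr (_ * _); rewrite /C mulr_sumr; apply: eq_bigr => x _; ring.
  under eq_bigr do rewrite K.
  under [in RHS]eq_bigr do rewrite K.
  exact: H.
have E3 : N%:R^-1 * N%:R^-1 * (F1 (- zeta) * F1 xi * F1 (zeta - xi)) =
          N%:R^-1 * N%:R^-1 * (F2 (- zeta) * F2 xi * F2 (zeta - xi)).
  apply/eqP; rewrite -subr_eq0; apply/eqP; move: xi; apply: (vander linj l0) => t.
  under eq_bigr do rewrite mulrBr.
  by apply/eqP; rewrite sumrB subr_eq0; apply/eqP; apply: E2.
move: E3 => /(mulfI _) -> //.
by rewrite mulf_neq0 // invr_eq0 pnatr_eq0.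
Qed.
End Basic.

Theorem theorem3 (n : nat) (Gam : seq 'Z_n) :
  prime n -> (5 < n)%N -> drift Gam != 0 -> reconstructive Gam.
Proof.
case: n Gam => [|[|p']] Gam pr n5 Dnz; [by [] | by [] |].
have [w prim] := C_prim_root_exists (ltn0Sn p'.+1).
have N2 : (2 < p'.+2)%N by lia.
exact: (@main_N p' pr w prim Gam N2 Dnz).
Qed.
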